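(* Let $\mathcal{H}_{C}=\mathcal{H}_{A}\oplus\mathcal{H}_{B}$ be a finite-dimensional Hilbert space decomposed into two nontrivial orthogonal subspaces with orthogonal projectors $\hat P_{AA},\hat P_{BB}$ ($\hat P_{AA}\hat P_{BB}=0$, $\hat P_{AA}+\hat P_{BB}=\hat I_{CC}$). Let $\Phi_{CC}$ be a quantum channel (completely positive trace-preserving map) on $\mathcal{L}(\mathcal{H}_C)$ with Kraus set $\{\hat M^{(j)}_{CC}\}_j$. Then $\Phi_{CC}$ is a Partially Coherent Direct Sum (PCDS) channel if and only if every Kraus operator is block diagonal, i.e. $\hat M^{(j)}_{CC}=\hat M^{(j)}_{AA}+\hat M^{(j)}_{BB}$ for all $j$, equivalently $\hat M^{(j)}_{AB}=\hat M^{(j)}_{BA}=0$ for all $j$, where $\hat M^{(j)}_{XY}:=\hat P_{XX}\hat M^{(j)}_{CC}\hat P_{YY}$.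
   Context: For $X,Y\in\{A,B\}$ and an operator $\hat\Theta_{CC}$ on $\mathcal{H}_C$ write $\hat\Theta_{XY}:=\hat P_{XX}\hat\Theta_{CC}\hat P_{YY}$, viewed as a linear map $\mathcal{H}_Y\to\mathcal{H}_X$. A channel $\Phi_{CC}$ on $\mathcal{H}_C$ is called PCDS if there exist linear maps $\Phi_{AA}$ on $\mathcal{L}(\mathcal{H}_A)$, $\Phi_{BB}$ on $\mathcal{L}(\mathcal{H}_B)$, $\Phi^{(off)}_{AB}$ on $\mathcal{L}(\mathcal{H}_B\to\mathcal{H}_A)$ and $\Phi^{(off)}_{BA}$ on $\mathcal{L}(\mathcal{H}_A\to\mathcal{H}_B)$ such that for every operator $\hat\Theta_{CC}$, $\Phi_{CC}[\hat\Theta_{CC}]=\Phi_{AA}[\hat\Theta_{AA}]+\Phi_{BB}[\hat\Theta_{BB}]+\Phi^{(off)}_{AB}[\hat\Theta_{AB}]+\Phi^{(off)}_{BA}[\hat\Theta_{BA}]$, i.e. in block form $\begin{pmatrix}\hat\Theta_{AA}&\hat\Theta_{AB}\\ \hat\Theta_{BA}&\hat\Theta_{BB}\end{pmatrix}\mapsto\begin{pmatrix}\Phi_{AA}[\hat\Theta_{AA}]&\Phi^{(off)}_{AB}[\hat\Theta_{AB}]\\ \Phi^{(off)}_{BA}[\hat\Theta_{BA}]&\Phi_{BB}[\hat\Theta_{BB}]\end{pmatrix}$. *)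

(* Defs.v *)
(* Complex Hilbert space H_C = C^n, operators = 'M[C]_n,
   with C an arbitrary numClosedFieldType (e.g. algC, or complex R). *)
From HB Require Import structures.
From mathcomp Require Import all_boot all_order all_algebra.
Set Implicit Arguments. Unset Strict Implicit. Unset Printing Implicit Defensive.
Import Order.TTheory GRing.Theory Num.Theory.
Local Open Scope ring_scope.

Definition adj (C : numClosedFieldType) (n : nat) (M : 'M[C]_n) : 'M[C]_n :=
  (map_mx Num.conj M)^T.

Definition orth_proj (C : numClosedFieldType) (n : nat) (P : 'M[C]_n) : Prop :=
  adj P = P /\ P *m P = P.

Definition kraus_channel (C : numClosedFieldType) (n k : nat)
  (Phi : 'M[C]_n -> 'M[C]_n) (M : 'I_k -> 'M[C]_n) : Prop :=
  (forall X, Phi X = \sum_(j < k) M j *m X *m adj (M j)) /\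
  \sum_(j < k) adj (M j) *m M j = 1%:M.

(* F is a linear map L(H_Y -> H_X) -> L(H_Y -> H_X), where operators H_Y -> H_X
   are represented as matrices Theta with PX Theta PY = Theta.  F is given on all
   of 'M_n, but only its behaviour on the block subspace is used. *)
Definition block_map (C : numClosedFieldType) (n : nat) (PX PY : 'M[C]_n)
  (F : 'M[C]_n -> 'M[C]_n) : Prop :=
  (forall (a : C) (X Y : 'M[C]_n), F (a *: X + Y) = a *: F X + F Y) /\
  (forall Theta, PX *m Theta *m PY = Theta -> PX *m F Theta *m PY = F Theta).

Definition PCDS (C : numClosedFieldType) (n : nat) (PA PB : 'M[C]_n)
  (Phi : 'M[C]_n -> 'M[C]_n) : Prop :=
  exists FAA FBB FAB FBA : 'M[C]_n -> 'M[C]_n,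
    [/\ block_map PA PA FAA, block_map PB PB FBB,
        block_map PA PB FAB, block_map PB PA FBA &
        forall Theta : 'M[C]_n,
          Phi Theta = FAA (PA *m Theta *m PA) + FBB (PB *m Theta *m PB)
                    + FAB (PA *m Theta *m PB) + FBA (PB *m Theta *m PA)].

(* Main.v *)
Require Import Defs.
From HB Require Import structures.
From mathcomp Require Import all_boot all_order all_algebra.
Import Order.TTheory GRing.Theory Num.Theory.
Local Open Scope ring_scope.

Lemma adjM (C : numClosedFieldType) (n : nat) (A B : 'M[C]_n) :
  adj (A *m B) = adj B *m adj A.
Proof. by rewrite /adj (map_mxM Num.conj) trmx_mul. Qed.

Lemma adjK (C : numClosedFieldType) (n : nat) (A : 'M[C]_n) : adj (adj A) = A.
Proof. by apply/matrixP=> i j; rewrite /adj !mxE conjCK. Qed.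

Lemma sum_psd_eq0 (C : numClosedFieldType) (n k : nat) (Y : 'I_k -> 'M[C]_n) :
  \sum_(j < k) Y j *m adj (Y j) = 0 -> forall j, Y j = 0.
Proof.
move=> H j; apply/matrixP=> i l; rewrite mxE.
have Hi := congr1 (fun A : 'M[C]_n => A i i) H; rewrite /= summxE mxE in Hi.
have pos : forall j0 : 'I_k, predT j0 -> 0 <= (Y j0 *m adj (Y j0)) i i.
  move=> j0 _; rewrite mxE; apply: sumr_ge0 => m _; rewrite /adj !mxE.
  exact: mul_conjC_ge0.
have Ej := psumr_eq0P pos Hi (isT : predT j).
rewrite mxE in Ej.
have pos2 : forall m : 'I_n, predT m -> 0 <= Y j i m * adj (Y j) m i.
  by move=> m _; rewrite /adj !mxE; exact: mul_conjC_ge0.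
have := psumr_eq0P pos2 Ej (isT : predT l).
by rewrite /adj !mxE => /eqP; rewrite mul_conjC_eq0 => /eqP.
Qed.

Lemma F0 (C : numClosedFieldType) (n : nat) (PX PY : 'M[C]_n) F :
  block_map PX PY F -> F 0 = 0.
Proof.
case=> lin _; have h := lin 1 0 0; rewrite !scale1r addr0 in h.
by apply: (addrI (F 0)); rewrite addr0 -h.
Qed.

Theorem theorem1 (C : numClosedFieldType) (n k : nat) (PA PB : 'M[C]_n)
  (Phi : 'M[C]_n -> 'M[C]_n) (M : 'I_k -> 'M[C]_n) :
  orth_proj PA -> orth_proj PB ->
  PA *m PB = 0 -> PA + PB = 1%:M ->
  PA != 0 -> PB != 0 ->
  kraus_channel Phi M ->
  (PCDS PA PB Phi <->
   forall j : 'I_k, PA *m M j *m PB = 0 /\ PB *m M j *m PA = 0).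
Proof.
move=> [aA iA] [aB iB] AB ApB _ _ [HPhi _].
have BA : PB *m PA = 0 by rewrite -aA -aB -adjM AB; apply/matrixP=> i j; rewrite /adj !mxE conjC0.
split.
- move=> [FAA [FBB [FAB [FBA [bAA bBB bAB bBA HF]]]]].
  have key : forall (P Q : 'M[C]_n) F, adj P = P -> P *m P = P -> adj Q = Q ->
      Q *m P = 0 -> P *m Q = 0 ->
      Phi P = F P -> P *m F P *m P = F P -> forall j, Q *m M j *m P = 0.
    move=> P Q F aP iP aQ QP PQ HP HFP.
    apply: sum_psd_eq0.
    have -> : \sum_(j < k) Q *m M j *m P *m adj (Q *m M j *m P)
            = Q *m Phi P *m Q.
      rewrite HPhi mulmx_sumr mulmx_suml; apply: eq_bigr => j _.
      rewrite !adjM aP aQ -!mulmxA; congr (_ *m (_ *m _)).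
      by rewrite !mulmxA iP.
    by rewrite HP -HFP !mulmxA QP !mul0mx.
  have PhiA : Phi PA = FAA PA.
    rewrite HF !iA BA AB !mul0mx (@F0 _ _ _ _ _ bBB) (@F0 _ _ _ _ _ bAB) (@F0 _ _ _ _ _ bBA) !addr0.
    done.
  have PhiB : Phi PB = FBB PB.
    rewrite HF !iB BA AB !mul0mx (@F0 _ _ _ _ _ bAA) (@F0 _ _ _ _ _ bAB) (@F0 _ _ _ _ _ bBA) add0r !addr0.
    done.
  move=> j; split.
  + apply: (key PB PA FBB) => //; case: bBB => _ ->//.
    by rewrite iB iB.
  + apply: (key PA PB FAA) => //; case: bAA => _ ->//.
    by rewrite iA iA.
- move=> Hblk.
  have comm : forall j, PA *m M j = M j *m PA /\ PB *m M j = M j *m PB.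
    move=> j; have [h1 h2] := Hblk j.
    have eA : PA *m M j = PA *m M j *m PA.
      by rewrite -[LHS]mulmx1 -ApB mulmxDr h1 addr0.
    have eA' : M j *m PA = PA *m M j *m PA.
      by rewrite -[LHS]mul1mx -ApB mulmxDl !mulmxA h2 addr0.
    have eB : PB *m M j = PB *m M j *m PB.
      by rewrite -[LHS]mulmx1 -ApB mulmxDr h2 add0r.
    have eB' : M j *m PB = PB *m M j *m PB.
      by rewrite -[LHS]mul1mx -ApB mulmxDl !mulmxA h1 add0r.
    by rewrite eA eA' eB eB'.
  have lin : forall (a : C) X Y, Phi (a *: X + Y) = a *: Phi X + Phi Y.
    move=> a X Y; rewrite !HPhi scaler_sumr -big_split; apply: eq_bigr => j _ /=.
    by rewrite mulmxDr mulmxDl -scalemxAr -scalemxAl.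
  have bm : forall P Q, orth_proj P -> orth_proj Q ->
      (forall j, P *m M j = M j *m P /\ Q *m M j = M j *m Q) -> block_map P Q Phi.
    move=> P Q [aP iP] [aQ iQ] cm; split => // Th HTh.
    rewrite -HTh !HPhi mulmx_sumr mulmx_suml; apply: eq_bigr => j _.
    have [c1 c2] := cm j.
    have c2' : adj (M j) *m Q = Q *m adj (M j) by rewrite -aQ -!adjM c2.
    rewrite -!mulmxA c2' !mulmxA c1 -[M j *m P *m P]mulmxA iP.
    by rewrite -[_ *m Q *m Q]mulmxA iQ.
  have oA : orth_proj PA by [].
  have oB : orth_proj PB by [].
  exists Phi, Phi, Phi, Phi; split.
  + by apply: bm => // j; have [c _] := comm j.
  + by apply: bm => // j; have [_ c] := comm j.
  + by apply: bm => // j; have [c1 c2] := comm j.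
  + by apply: bm => // j; have [c1 c2] := comm j.
  + move=> Th.
    have lin1 : forall X Y, Phi (X + Y) = Phi X + Phi Y.
      by move=> X Y; have := lin 1 X Y; rewrite !scale1r.
    rewrite -!lin1; congr Phi.
    rewrite -{1}[Th]mul1mx -{1}[Th]mulmx1 -ApB !mulmxDl !mulmxDr !mulmxA.
    rewrite -!addrA; congr (_ + _).
    by rewrite [RHS]addrC -addrA.
Qed.
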